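(* Let $N\ge1$, let $\xi_0,\dots,\xi_N$ be the LGL nodes on $[-1,1]$ with LGL weights $\omega_0,\dots,\omega_N$, $\mathcal{M}=\mathrm{diag}(\omega_0,\dots,\omega_N)$, and let $\mathcal{V}_{ij}=L_j(\xi_i)$ ($i,j=0,\dots,N$) be the Vandermonde matrix of the normalized Legendre polynomials $L_j=\sqrt{(2j+1)/2}\,P_j$. Let $\mathcal{C}=\mathrm{diag}(\sigma_0,\dots,\sigma_N)$ be a diagonal (modal cutoff) matrix with real entries, and define the filter matrix $\mathcal{F}=\mathcal{V}\,\mathcal{C}\,\mathcal{V}^{-1}$ and the auxiliary filter matrix $\widetilde{\mathcal{F}}=\mathcal{M}^{-1}\mathcal{F}^T\mathcal{M}$. Then $\widetilde{\mathcal{F}}=\mathcal{F}$.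
   Context: The LGL nodes are $\xi_0=-1$, $\xi_N=1$ and the zeros of $P_N'$ (with $P_N$ the degree-$N$ Legendre polynomial); the LGL weights are $\omega_i=\frac{2}{N(N+1)P_N(\xi_i)^2}$. $\mathcal{V}$ is invertible since the $L_j$ form a basis of polynomials of degree $\le N$ and the nodes are distinct. *)

(* Defs.v *)
From HB Require Import structures.
From mathcomp Require Import all_boot all_order all_algebra.
From mathcomp Require Import reals.
Set Implicit Arguments. Unset Strict Implicit. Unset Printing Implicit Defensive.
Import Order.TTheory GRing.Theory Num.Theory.
Local Open Scope ring_scope.

Section LGL.
Variable R : realType.

Definition legendre (n : nat) : {poly R} :=
  ((2 ^ n * n`!)%:R)^-1 *: (('X ^+ 2 - 1) ^+ n)^`(n).

Definition nlegendre (j : nat) (x : R) : R :=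
  Num.sqrt (((2 * j + 1)%:R) / 2) * (legendre j).[x].

Definition LGL_nodes (N : nat) (xi : 'I_N.+1 -> R) : Prop :=
  [/\ xi ord0 = -1, xi ord_max = 1,
      (forall i j : 'I_N.+1, (i < j)%N -> xi i < xi j) &
      (forall i : 'I_N.+1, (0 < i)%N -> (i < N)%N -> root (legendre N)^`() (xi i))].

Definition LGL_weight (N : nat) (xi : 'I_N.+1 -> R) (i : 'I_N.+1) : R :=
  2 / ((N * N.+1)%:R * ((legendre N).[xi i]) ^+ 2).

Definition mass_mx (N : nat) (xi : 'I_N.+1 -> R) : 'M[R]_N.+1 :=
  diag_mx (\row_i LGL_weight xi i).

Definition vander_mx (N : nat) (xi : 'I_N.+1 -> R) : 'M[R]_N.+1 :=
  \matrix_(i, j) nlegendre j (xi i).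

Definition filter_mx (N : nat) (xi : 'I_N.+1 -> R) (sigma : 'rV[R]_N.+1)
  : 'M[R]_N.+1 :=
  vander_mx xi *m diag_mx sigma *m invmx (vander_mx xi).

Definition aux_filter_mx (N : nat) (xi : 'I_N.+1 -> R) (sigma : 'rV[R]_N.+1)
  : 'M[R]_N.+1 :=
  invmx (mass_mx xi) *m (filter_mx xi sigma)^T *m mass_mx xi.

End LGL.

(* Main.v *)
Require Import Defs.
From HB Require Import structures.
From mathcomp Require Import all_boot all_order all_algebra.
From mathcomp Require Import reals.
From mathcomp Require Import ring lra zify.
Set Implicit Arguments. Unset Strict Implicit. Unset Printing Implicit Defensive.
Import Order.TTheory GRing.Theory Num.Theory.
Local Open Scope ring_scope.
Section Aux.
Variable R : realType.
Implicit Types p q f g h : {poly R}.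

Lemma size_derivR p : size p^`() = (size p).-1.
Proof.
have [lep1|lt1p] := leqP (size p) 1.
  by rewrite {1}[p]size1_polyC // derivC size_poly0 -subn1 (eqnP lep1).
rewrite size_poly_eq // mulrn_eq0 -subn2 -subSn // subn2.
by rewrite lead_coef_eq0 -size_poly_eq0 -(subnKC lt1p).
Qed.

Lemma deriv_eq0_const p : p^`() = 0 -> p = (p`_0)%:P.
Proof.
move=> h; apply: size1_polyC.
have := size_derivR p; rewrite h size_poly0.
by case: (size p) => [|[|n]].
Qed.

Definition prim p : {poly R} :=
  \poly_(i < (size p).+1) (if i is j.+1 then p`_j / j.+1%:R else 0).

Lemma prim_deriv p : (prim p)^`() = p.
Proof.
apply/polyP => i; rewrite coef_deriv coef_poly ltnS.
case: ltnP => hi.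
  by rewrite /= -[_ *+ _]mulr_natr divfK // pnatr_eq0.
by rewrite mul0rn nth_default.
Qed.

Definition Int p : R := (prim p).[1] - (prim p).[-1].

Lemma Int_deriv h : Int h^`() = h.[1] - h.[-1].
Proof.
have := deriv_eq0_const (p := prim h^`() - h).
rewrite derivB prim_deriv subrr => /(_ erefl) e.
rewrite /Int; have -> : prim h^`() = h + (prim h^`() - h) by rewrite [_ + (_ - _)]addrC subrK.
by rewrite e !hornerD !hornerC; ring.
Qed.

Lemma IntD f g : Int (f + g) = Int f + Int g.
Proof.
have := deriv_eq0_const (p := prim (f + g) - (prim f + prim g)).
rewrite derivB derivD !prim_deriv subrr => /(_ erefl) e.
rewrite /Int; have -> : prim (f + g) = (prim f + prim g) + (prim (f + g) - (prim f + prim g)) by rewrite [_ + (_ - _)]addrC subrK.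
by rewrite e !hornerD !hornerC; ring.
Qed.

Lemma IntZ a f : Int (a *: f) = a * Int f.
Proof.
have := deriv_eq0_const (p := prim (a *: f) - a *: prim f).
rewrite derivB derivZ !prim_deriv subrr => /(_ erefl) e.
rewrite /Int; have -> : prim (a *: f) = a *: prim f + (prim (a *: f) - a *: prim f) by rewrite [_ + (_ - _)]addrC subrK.
by rewrite e !hornerD !hornerC !hornerZ; ring.
Qed.

Lemma Int0 : Int 0 = 0.
Proof. by have := IntZ 0 0; rewrite scale0r mul0r. Qed.

Lemma IntN f : Int (- f) = - Int f.
Proof. by rewrite -scaleN1r IntZ mulN1r. Qed.

Lemma IntB f g : Int (f - g) = Int f - Int g.
Proof. by rewrite IntD IntN. Qed.

Lemma Int_sum (I : finType) (P : pred I) (F : I -> {poly R}) :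
  Int (\sum_(i | P i) F i) = \sum_(i | P i) Int (F i).
Proof. by apply: (big_morph Int IntD Int0). Qed.

Lemma Int_parts f g :
  Int (f * g^`()) = (f * g).[1] - (f * g).[-1] - Int (f^`() * g).
Proof. by rewrite -Int_deriv derivM IntD; ring. Qed.

End Aux.
Section Leg.
Variable R : realType.
Implicit Types p q f g h : {poly R}.

Lemma eq_by_diff (x y a b : {poly R}) : a = b -> x - y = a - b -> x = y.
Proof. by move=> -> /eqP; rewrite subrr subr_eq0 => /eqP. Qed.

Lemma mult_deriv (a : R) m h k : (k <= m)%N ->
  exists h', (('X - a%:P) ^+ m * h)^`(k) = ('X - a%:P) ^+ (m - k) * h' /\
             h'.[a] = (m ^_ k)%:R * h.[a].
Proof.
elim: k => [_|k IH hk].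
  by exists h; rewrite derivn0 subn0 ffactn0 mul1r.
have [h' [e1 e2]] := IH (ltnW hk).
exists (h' *+ (m - k) + ('X - a%:P) * h'^`()); split.
  rewrite derivnS e1 derivM deriv_exp derivXsubC mul1r.
  have -> : (m - k = (m - k.+1).+1)%N by rewrite subnS prednK // subn_gt0.
  by rewrite /= exprS; ring.
by rewrite hornerD hornerMn hornerM hornerXsubC subrr mul0r addr0 e2 ffactnSr natrM -mulr_natr; ring.
Qed.

Definition uu n : {poly R} := ('X ^+ 2 - 1) ^+ n.

Lemma uu_fact1 n : uu n = ('X - 1%:P) ^+ n * ('X - (-1)%:P) ^+ n.
Proof. by rewrite /uu -exprMn polyCN polyC1; congr (_ ^+ _); ring. Qed.

Lemma uu_fact2 n : uu n = ('X - (-1)%:P) ^+ n * ('X - 1%:P) ^+ n.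
Proof. by rewrite uu_fact1 mulrC. Qed.

Lemma uu_vanish n k : (k < n)%N -> (uu n)^`(k).[1] = 0 /\ (uu n)^`(k).[-1] = 0.
Proof.
move=> hk; split.
  have [h' [e _]] := mult_deriv 1 (('X - (-1)%:P) ^+ n) (ltnW hk).
  by rewrite uu_fact1 e hornerM horner_exp hornerXsubC subrr expr0n subn_eq0 leqNgt hk mul0r.
have [h' [e _]] := mult_deriv (-1) (('X - 1%:P) ^+ n) (ltnW hk).
by rewrite uu_fact2 e hornerM horner_exp hornerXsubC subrr expr0n subn_eq0 leqNgt hk mul0r.
Qed.

Lemma legendreE n : legendre R n = ((2 ^ n * n`!)%:R)^-1 *: (uu n)^`(n).
Proof. by []. Qed.

Lemma legc_neq0 n : ((2 ^ n * n`!)%:R)^-1 != 0 :> R.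
Proof. by rewrite invr_eq0 pnatr_eq0 muln_eq0 negb_or expn_eq0 /= -lt0n fact_gt0. Qed.

Lemma legendre1 n : (legendre R n).[1] != 0.
Proof.
have [h' [e1 e2]] := mult_deriv 1 (('X - (-1)%:P) ^+ n) (leqnn n).
rewrite legendreE hornerZ uu_fact1 e1 subnn expr0 mul1r e2 mulf_neq0 ?legc_neq0 //.
rewrite mulf_neq0 // ?pnatr_eq0 -?lt0n ?ffact_gt0 // horner_exp hornerXsubC.
by rewrite expf_neq0 // opprK -(natrD _ 1 1) pnatr_eq0.
Qed.

Lemma legendreN1 n : (legendre R n).[-1] != 0.
Proof.
have [h' [e1 e2]] := mult_deriv (-1) (('X - 1%:P) ^+ n) (leqnn n).
rewrite legendreE hornerZ uu_fact2 e1 subnn expr0 mul1r e2 mulf_neq0 ?legc_neq0 //.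
rewrite mulf_neq0 // ?pnatr_eq0 -?lt0n ?ffact_gt0 // horner_exp hornerXsubC.
by rewrite expf_neq0 // -opprD oppr_eq0 -(natrD _ 1 1) pnatr_eq0.
Qed.

Lemma Int_uu n k q : (k <= n)%N -> Int (q * (uu n)^`(k)) = (-1) ^+ k * Int (q^`(k) * uu n).
Proof.
elim: k q => [|k IH] q hk; first by rewrite !derivn0 expr0 mul1r.
have [v1 v2] := uu_vanish hk.
rewrite derivnS Int_parts !hornerM v1 v2 !mulr0 subrr sub0r IH ?(ltnW hk) //.
by rewrite -derivSn exprS; ring.
Qed.

Lemma legendre_ortho n q : (size q <= n)%N -> Int (q * legendre R n) = 0.
Proof.
move=> hq; rewrite legendreE -scalerAr IntZ Int_uu // derivn_poly0 //.
by rewrite mul0r Int0 !mulr0.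
Qed.

Lemma size_uu n : size (uu n) = (2 * n).+1.
Proof.
have := size_exp ('X ^+ 2 - 1 : {poly R}) n.
rewrite -polyC1 size_XnsubC // /= mulnC.
have : uu n != 0 by rewrite /uu -polyC1 monic_neq0 // monic_exp // monicXnsubC.
rewrite -size_poly_eq0 /uu polyC1; by case: (size _) => //= m _ ->.
Qed.

Lemma lead_uu n : lead_coef (uu n) = 1.
Proof. by rewrite /uu lead_coef_exp -polyC1 lead_coefXnsubC // expr1n. Qed.

Lemma size_legendre n : (size (legendre R n) <= n.+1)%N.
Proof.
rewrite legendreE; apply: leq_trans (size_scale_leq _ _) _.
apply/leq_sizeP => i hi; rewrite coef_derivn nth_default ?mul0rn //.
by rewrite size_uu; lia.
Qed.

Lemma coef_legendre n : (legendre R n)`_n != 0.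
Proof.
rewrite legendreE coefZ mulf_neq0 ?legc_neq0 // coef_derivn.
have -> : (n + n = (size (uu n)).-1)%N by rewrite size_uu; lia.
by rewrite -lead_coefE lead_uu mulrn_eq0 /= oner_eq0 orbF -lt0n ffact_gt0 size_uu; lia.
Qed.

End Leg.
Section Ode.
Variable R : realType.
Implicit Types p q f g h : {poly R}.

Lemma uu_E0 n : ('X ^+ 2 - 1) * (uu R n)^`() = ('X * uu R n) *+ (2 * n).
Proof.
rewrite /uu deriv_exp derivB derivXn derivC subr0 /=.
case: n => [|n]; first by rewrite !mulr0n mulr0.
rewrite /= [_ ^+ n.+1]exprS; set x := ('X : {poly R}); set y := (_ ^+ n); ring.
Qed.

Lemma uu_G n k : ('X ^+ 2 - 1) * (uu R n)^`(k.+2) + ('X * (uu R n)^`(k.+1)) *+ (2 * k.+1)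
   + (uu R n)^`(k) *+ (k.+1 * k)
  = ('X * (uu R n)^`(k.+1)) *+ (2 * n) + (uu R n)^`(k) *+ (2 * n * k.+1).
Proof.
elim: k => [|k IH].
  have H := congr1 deriv (uu_E0 n).
  rewrite derivM derivMn derivM derivB derivXn derivC derivX subr0 /= in H.
  apply: (eq_by_diff H); rewrite !derivnS !derivn0; set x := ('X : {poly R}); ring.
have H := congr1 deriv IH.
rewrite !derivD !derivMn !derivM derivB derivXn derivC derivX subr0 /= -!derivnS in H.
apply: (eq_by_diff H); set x := ('X : {poly R}); ring.
Qed.

Lemma legendre_ode n :
  ((1 - 'X ^+ 2) * (legendre R n)^`())^`() = - ((legendre R n) *+ (n * n.+1)).
Proof.
have H := uu_G n n.
rewrite legendreE derivZ -scalerAr derivZ scalerMnr -scalerN; congr (_ *: _).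
rewrite derivM derivB derivXn derivC sub0r /=.
rewrite !derivnS in H.
symmetry; apply: (eq_by_diff H); set x := ('X : {poly R}); ring.
Qed.

End Ode.
Section Quad.
Variable R : realType.
Variable N : nat.
Hypothesis hN : (1 <= N)%N.
Variable xi : 'I_N.+1 -> R.
Hypothesis hxi : LGL_nodes xi.
Implicit Types p q f g a : {poly R}.

Local Notation P := (legendre R N).
Definition ww : {poly R} := (1 - 'X ^+ 2) * P^`().

Lemma xi0 : xi ord0 = -1. Proof. by case: hxi. Qed.
Lemma xiN : xi ord_max = 1. Proof. by case: hxi. Qed.

Lemma xi_inj i j : xi i = xi j -> i = j.
Proof.
case: hxi => _ _ mono _ e; apply: val_inj; case: (ltngtP i j) => // h.
- by have := mono _ _ h; rewrite e ltxx.
- by have := mono _ _ h; rewrite e ltxx.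
Qed.

Lemma xi_neq i j : i != j -> xi i - xi j != 0.
Proof. by move=> h; rewrite subr_eq0; apply: contra h => /eqP /xi_inj ->. Qed.

Lemma ww_root k : ww.[xi k] = 0.
Proof.
case: hxi => h0 hM _ hr; rewrite /ww hornerM.
have [->|k0] := eqVneq k ord0.
  by rewrite h0 !hornerE sqrrN expr1n subrr mul0r.
have [->|kM] := eqVneq k ord_max.
  by rewrite hM !hornerE expr1n subrr mul0r.
have /eqP -> : root P^`() (xi k).
  apply: hr; first by rewrite lt0n; apply: contra k0 => /eqP k0; apply/eqP/val_inj.
  have := ltn_ord k; rewrite ltnS leq_eqVlt => /orP [/eqP kN|//].
  by exfalso; move/eqP: kM; apply; apply: val_inj; rewrite /= kN.
by rewrite mulr0.
Qed.

Lemma size_P : size P = N.+1.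
Proof.
apply/eqP; rewrite eqn_leq size_legendre /= ltnNge; apply/negP => /leq_sizeP /(_ N (leqnn N)) /eqP.
by rewrite (negbTE (coef_legendre R N)).
Qed.

Lemma size_dP : size P^`() = N.
Proof. by rewrite size_derivR size_P. Qed.

Lemma size_1mX2 : size (1 - 'X ^+ 2 : {poly R}) = 3.
Proof.
have -> : (1 - 'X ^+ 2 : {poly R}) = - ('X ^+ 2 - 1%:P) by rewrite opprB polyC1.
by rewrite size_polyN size_XnsubC.
Qed.

Lemma size_ww : size ww = N.+2.
Proof.
rewrite /ww size_mul ?size_dP ?size_1mX2 //.
- by rewrite -size_poly_eq0 size_1mX2.
- by rewrite -size_poly_eq0 size_dP -lt0n.
Qed.

Lemma ww_neq0 : ww != 0.
Proof. by rewrite -size_poly_eq0 size_ww. Qed.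

Lemma ww_deriv : ww^`() = - (P *+ (N * N.+1)).
Proof. exact: legendre_ode. Qed.


Definition lag (j : 'I_N.+1) : {poly R} :=
  (\prod_(k | k != j) (xi j - xi k))^-1 *: \prod_(k | k != j) ('X - (xi k)%:P).

Lemma lag_eval i j : (lag j).[xi i] = (i == j)%:R.
Proof.
rewrite /lag hornerZ horner_prod.
rewrite [X in _ * X](eq_bigr (fun k => xi i - xi k)); last by move=> k _; rewrite hornerXsubC.
have [->|ij] := eqVneq i j.
  by rewrite mulVf //; apply/prodf_neq0 => k kj; apply: xi_neq; rewrite eq_sym.
by rewrite [X in _ * X](bigD1 i) //= subrr mul0r mulr0.
Qed.

Lemma size_lag j : (size (lag j) <= N.+1)%N.
Proof.
apply: leq_trans (size_scale_leq _ _) _.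
rewrite size_prod; last by move=> k _; rewrite polyXsubC_eq0.
under eq_bigr do rewrite size_XsubC.
rewrite sum_nat_const cardC1 card_ord /=; lia.
Qed.

Lemma interp p : (size p <= N.+1)%N -> p = \sum_j p.[xi j] *: lag j.
Proof.
move=> hp; apply/eqP; rewrite -subr_eq0; apply/eqP.
apply: (roots_geq_poly_eq0 (rs := [seq xi j | j <- enum 'I_N.+1])).
- apply/allP => x /mapP [k _ ->]; rewrite rootE hornerD hornerN horner_sum.
  under eq_bigr do rewrite hornerZ lag_eval.
  rewrite (bigD1 k) //= eqxx mulr1 big1 ?addr0 ?subrr //.
  by move=> j /negbTE jk; rewrite eq_sym jk mulr0.
- by rewrite map_inj_uniq ?enum_uniq //; exact: xi_inj.
- rewrite size_map size_enum_ord.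
  apply: leq_trans (size_polyD _ _) _; rewrite size_polyN geq_max hp /=.
  apply: (big_ind (fun q => size q <= N.+1)%N) => //.
  + by rewrite size_poly0.
  + by move=> a b ha hb; apply: leq_trans (size_polyD _ _) _; rewrite geq_max ha hb.
  + by move=> j _; apply: leq_trans (size_scale_leq _ _) (size_lag j).
Qed.

Definition Qh (p : {poly R}) : R := \sum_j Int (lag j) * p.[xi j].

Lemma QhD f g : Qh (f + g) = Qh f + Qh g.
Proof. by rewrite /Qh -big_split; apply: eq_bigr => j _; rewrite hornerD mulrDr. Qed.

Lemma Qh_exactN p : (size p <= N.+1)%N -> Qh p = Int p.
Proof.
move=> hp; rewrite {2}(interp hp) Int_sum /Qh; apply: eq_bigr => j _.
by rewrite IntZ mulrC.
Qed.

Lemma Qh_mulw a : Qh (a * ww) = 0.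
Proof. by rewrite /Qh big1 // => j _; rewrite hornerM ww_root !mulr0. Qed.

Lemma h1mX2 (x : R) : (1 - 'X ^+ 2 : {poly R}).[x] = 1 - x ^+ 2.
Proof. by rewrite !hornerE. Qed.

Lemma Int_mulw a : (size a <= N.-1)%N -> Int (a * ww) = 0.
Proof.
move=> ha; rewrite /ww mulrA Int_parts !hornerM !h1mX2 expr1n sqrrN expr1n subrr.
rewrite !mulr0 !mul0r subrr sub0r legendre_ortho ?oppr0 //.
have h := size_polyMleq a (1 - 'X ^+ 2); rewrite size_1mX2 in h.
rewrite size_derivR; move: h ha hN; lia.
Qed.

Lemma Qh_exact p : (size p <= N.*2)%N -> Qh p = Int p.
Proof.
move=> hp; rewrite (divp_eq p ww) QhD IntD Qh_mulw Int_mulw ?add0r.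
  by rewrite Qh_exactN // -ltnS -size_ww ltn_modpN0 // ww_neq0.
rewrite size_divp ?ww_neq0 // size_ww /=; move: (size p) hp hN => s; clear; lia.
Qed.



Lemma ww_factor (a b : 'I_N.+1) : a != b ->
  exists w2, ww = w2 * ('X - (xi b)%:P) * ('X - (xi a)%:P) /\ size w2 = N.
Proof.
move=> ab.
have /factor_theorem [w1 e1] : root ww (xi a) by rewrite /root ww_root.
have /factor_theorem [w2 e2] : root w1 (xi b).
  have := ww_root b; rewrite e1 hornerM hornerXsubC => /eqP.
  rewrite mulf_eq0 => /orP [//|]; rewrite (negbTE (xi_neq _)) //.
  by rewrite eq_sym.
exists w2; split; first by rewrite e1 e2.
have w2n0 : w2 != 0.
  by apply: contraNneq ww_neq0 => w20; rewrite e1 e2 w20 !mul0r.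
have := size_ww; rewrite e1 e2 !size_Mmonic ?monicXsubC ?size_XsubC //.
  by rewrite !addn2 /=; case.
by rewrite mulf_neq0 // polyXsubC_eq0.
Qed.

Local Notation om j := (Int (lag j)).

Lemma E4 (a b : 'I_N.+1) : a != b ->
  om a * P.[xi a] * (ww^`()).[xi a] = om b * P.[xi b] * (ww^`()).[xi b].
Proof.
move=> ab; have [w2 [ew sw2]] := ww_factor ab.
have hQ : Qh (w2 * P) = 0.
  rewrite Qh_exact; first by rewrite legendre_ortho // sw2.
  apply: leq_trans (size_polyMleq _ _) _; rewrite sw2 size_P; move: hN; clear; lia.
have hz : forall j, j != a -> j != b -> w2.[xi j] = 0.
  move=> j ja jb; have := ww_root j; rewrite ew !hornerM !hornerXsubC => /eqP.
  rewrite !mulf_eq0 (negbTE (xi_neq ja)) (negbTE (xi_neq jb)) !orbF.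
  by move/eqP.
move: hQ; rewrite /Qh (bigD1 a) // (bigD1 b) 1?eq_sym //= big1; last first.
  by move=> j /andP [ja jb]; rewrite hornerM hz // mul0r mulr0.
rewrite addr0 ew !derivM !derivXsubC !mulr1 !hornerD !hornerM !hornerXsubC !subrr !mulr0 !add0r addr0.
rewrite hornerD hornerM hornerXsubC subrr mulr0 add0r => h.
apply/eqP; rewrite -subr_eq0; apply/eqP.
transitivity ((xi a - xi b) * (om a * (w2.[xi a] * P.[xi a]) + om b * (w2.[xi b] * P.[xi b]))).
  ring.
by rewrite h mulr0.
Qed.


Lemma interior_root (j : 'I_N.+1) : j != ord0 -> j != ord_max -> P^`().[xi j] = 0.
Proof.
case: hxi => _ _ _ hr j0 jM; apply/eqP; apply: hr.
  by rewrite lt0n; apply: contra j0 => /eqP e; apply/eqP/val_inj.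
have := ltn_ord j; rewrite ltnS leq_eqVlt => /orP [/eqP kN|//].
by exfalso; move/eqP: jM; apply; apply: val_inj; rewrite /= kN.
Qed.

Lemma om0_neq0 : om ord0 != 0.
Proof.
have hs : (size ((1 - 'X) * P^`())%R <= N.+1)%N.
  apply: leq_trans (size_polyMleq _ _) _; rewrite size_dP.
  have -> : (1 - 'X : {poly R}) = - ('X - 1%:P) by rewrite opprB polyC1.
  by rewrite size_polyN size_XsubC.
have := Qh_exactN hs; rewrite Int_parts derivB derivX -polyC1 derivC sub0r.
rewrite mulN1r IntN -[P]mul1r legendre_ortho ?size_poly1 // mul1r oppr0 subr0.
rewrite !hornerM !hornerD !hornerN !hornerX !hornerC subrr mul0r sub0r.
rewrite /Qh (bigD1 ord0) //= big1; last first.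
  move=> j j0; have [->|jM] := eqVneq j ord_max.
    by rewrite hornerM hornerD hornerN hornerX hornerC xiN subrr mul0r mulr0.
  by rewrite hornerM interior_root // !mulr0.
rewrite addr0 hornerM hornerD hornerN hornerX hornerC xi0 => h.
apply/eqP => e; move: h; rewrite e mul0r => /esym /eqP.
rewrite oppr_eq0 mulf_eq0 (negbTE (legendreN1 R N)) orbF opprK -(natrD _ 1 1) pnatr_eq0 //.
Qed.



Definition kap : R := om ord0 * P.[xi ord0] ^+ 2.

Lemma kap_neq0 : kap != 0.
Proof. by rewrite /kap xi0 mulf_neq0 ?om0_neq0 // expf_neq0 // legendreN1. Qed.

Lemma mN_neq0 : ((N * N.+1)%:R : R) != 0.
Proof. by rewrite pnatr_eq0 muln_eq0 negb_or -!lt0n hN. Qed.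

Lemma aux_sq (a b x y : R) n : (n%:R : R) != 0 ->
  a * x * - (x *+ n) = b * y * - (y *+ n) -> a * x ^+ 2 = b * y ^+ 2.
Proof.
move=> hn h.
have e : (a * x ^+ 2 - b * y ^+ 2) * (- n%:R) = a * x * - (x *+ n) - b * y * - (y *+ n).
  by ring.
rewrite h subrr in e; move/eqP: e; rewrite mulf_eq0 oppr_eq0 (negbTE hn) orbF subr_eq0.
by move/eqP.
Qed.

Lemma E6 j : om j * P.[xi j] ^+ 2 = kap.
Proof.
have [->|j0] := eqVneq j ord0; first by [].
have h := E4 j0; rewrite ww_deriv !hornerN !hornerMn in h.
exact: aux_sq mN_neq0 h.
Qed.
Lemma P_neq0 j : P.[xi j] != 0.
Proof.
apply: contraNneq kap_neq0 => e; by rewrite -(E6 j) e expr0n mulr0.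
Qed.

Definition mu : R := 2 / ((N * N.+1)%:R * kap).

Lemma weightE j : LGL_weight xi j = mu * om j.
Proof.
have e := E6 j; have hp := P_neq0 j.
have -> : om j = kap / P.[xi j] ^+ 2.
  by rewrite -e mulfK // expf_neq0.
rewrite /LGL_weight /mu; field.
by rewrite hp kap_neq0 pnatr_eq0 -lt0n hN andbT addrC natr1 pnatr_eq0.
Qed.

Lemma weight_gt0 j : 0 < LGL_weight xi j.
Proof.
rewrite /LGL_weight divr_gt0 // mulr_gt0 //.
  by rewrite ltr0n muln_gt0 hN.
by rewrite exprn_even_gt0 //= P_neq0.
Qed.

Lemma discrete_ortho (j k : nat) : (j <= N)%N -> (k <= N)%N -> j != k ->
  \sum_i LGL_weight xi i * ((legendre R j).[xi i] * (legendre R k).[xi i]) = 0.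
Proof.
move=> hj hk jk.
have -> : \sum_i LGL_weight xi i * ((legendre R j).[xi i] * (legendre R k).[xi i])
   = mu * Qh (legendre R j * legendre R k).
  rewrite /Qh mulr_sumr; apply: eq_bigr => i _; rewrite weightE hornerM; ring.
rewrite Qh_exact.
  wlog jltk : j k hj hk jk / (j < k)%N.
    move=> H; case: (ltngtP j k) => h; first exact: (H j k).
      by rewrite [legendre R j * _]mulrC; apply: (H k j) => //; rewrite eq_sym.
    by move: jk; rewrite h eqxx.
  by rewrite legendre_ortho ?mulr0 // (leq_trans (size_legendre R j)).
apply: leq_trans (size_polyMleq _ _) _; rewrite -muln2.
have := size_legendre R j; have := size_legendre R k.
move: (size (legendre R j)) (size (legendre R k)) hj hk jk => a b hj hk jk.
move/eqP: jk => jk; move: hj hk jk; clear; lia.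
Qed.

End Quad.

Unset Implicit Arguments.

Theorem proposition1 (R : realType) (N : nat) (hN : (1 <= N)%N)
  (xi : 'I_N.+1 -> R) (hxi : LGL_nodes xi) (sigma : 'rV[R]_N.+1) :
  aux_filter_mx xi sigma = filter_mx xi sigma.
Proof.
set V := vander_mx xi; set M := mass_mx xi; set C := diag_mx sigma.
set W := V^T; set G := W *m M *m V.
have wpos := @weight_gt0 R N hN xi hxi.
have dort := @discrete_ortho R N hN xi hxi.
have sq_pos : forall j : 'I_N.+1, 0 < Num.sqrt (((2 * j + 1)%:R) / 2 : R).
  by move=> j; rewrite sqrtr_gt0 divr_gt0 // ltr0n addn1.
have GE : forall i j, G i j = Num.sqrt (((2 * i + 1)%:R) / 2) * Num.sqrt (((2 * j + 1)%:R) / 2)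
   * \sum_k LGL_weight xi k * ((legendre R i).[xi k] * (legendre R j).[xi k]).
  move=> i j; rewrite /G /M /mass_mx mul_mx_diag !mxE mulr_sumr; apply: eq_bigr => k _.
  by rewrite !mxE /nlegendre; ring.
have Goff : forall i j, i != j -> G i j = 0.
  move=> i j ij; rewrite GE dort ?mulr0 //; by rewrite -ltnS.
have Gdiag : forall i, 0 < G i i.
  move=> i; rewrite GE mulr_gt0 ?mulr_gt0 //.
  rewrite (bigD1 ord_max) //=; apply: (@lt_le_trans _ _ (LGL_weight xi ord_max * ((legendre R i).[xi ord_max] * (legendre R i).[xi ord_max]))).
    rewrite mulr_gt0 // -expr2 exprn_even_gt0 //= (xiN hxi).
    exact: legendre1.
  rewrite lerDl; apply: sumr_ge0 => k _; apply: mulr_ge0; [exact: ltW | by rewrite -expr2 sqr_ge0].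
have GD : G = diag_mx (\row_i G i i).
  apply/matrixP => i j; rewrite [RHS]mxE [X in X *+ _]mxE; have [->|ij] := eqVneq i j; first by rewrite mulr1n.
  by rewrite Goff // mulr0n.
have detG : \det G != 0.
  rewrite GD det_diag; apply/prodf_neq0 => i _; rewrite mxE; exact: lt0r_neq0.
have hM : M \in unitmx.
  rewrite unitmxE unitfE /M /mass_mx det_diag; apply/prodf_neq0 => i _; rewrite mxE.
  exact: lt0r_neq0.
have hV : V \in unitmx.
  rewrite unitmxE unitfE; apply: contra detG => /eqP d.
  by rewrite /G !det_mulmx /W det_tr d !mul0r.
have hW : W \in unitmx by rewrite /W unitmx_tr.
have CG : C *m G = G *m C.
  rewrite /C mul_diag_mx mul_mx_diag; apply/matrixP => i j; rewrite [LHS]mxE [RHS]mxE.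
  have [->|ij] := eqVneq i j; first by rewrite mulrC.
  by rewrite Goff // mulr0 mul0r.
rewrite /aux_filter_mx /filter_mx -/V -/M -/C !trmx_mul tr_diag_mx trmx_inv -/W -/C.
have e1 : V *m C *m invmx V = invmx M *m invmx W *m (G *m C) *m invmx V.
  by rewrite /G -!mulmxA mulKmx // mulKmx.
rewrite e1 -CG /G -!mulmxA mulmxV // mulmx1.
by rewrite !mulmxA.
Qed.
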